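(* Let $p\geq2$ be an integer and consider, on the domain $\{(\theta_1,\theta_p,I_1,I_p)\in\mathbb{T}^2\times(0,\infty)^2\}$, the Hamiltonian \[ \mathcal{G}^+(\theta_1,\theta_p,I_1,I_p):=\sqrt2^{\,1-p}\,I_1^{p/2}\sqrt{I_p}\,\cos(p\,\theta_1-\theta_p), \] with $(\theta_1,I_1)$ and $(\theta_p,I_p)$ canonically conjugate pairs. Let $\mathtt{c}>0$. Then for every sufficiently small $\varepsilon>0$ with $\mathtt{c}>p\varepsilon$ there exists an orbit $g^+_{\varepsilon,\mathtt{c}}(t)=(\theta_1(t),\theta_p(t),I_1(t),I_p(t))$ of $\mathcal{G}^+$ and a time $T_0>0$ such that \[ I_1(0)=\mathtt{c}-p\varepsilon,\quad I_p(0)=\varepsilon,\qquad I_1(T_0)=\mathtt{c}(1-p^{-1}),\quad I_p(T_0)=\frac{\mathtt{c}}{p^2}, \] and \[ \frac{\sqrt2^{\,p+1}}{\mathtt{c}^{\frac{p-1}{2}}}\,p^{-1}\le T_0\le\frac{\sqrt2^{\,p+1}}{\mathtt{c}^{\frac{p-1}{2}}\,(1-p^{-1})^{p/2}}\,p^{-1}. \]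
   Context: The orbit is a solution of Hamilton's equations $\dot\theta_k=\partial_{I_k}\mathcal{G}^+$, $\dot I_k=-\partial_{\theta_k}\mathcal{G}^+$, $k\in\{1,p\}$. ''Sufficiently small $\varepsilon$'' means $\varepsilon$ below a threshold that may depend on $\mathtt{c}$ and $p$. *)

(* Defs.v *)
From Stdlib Require Import Reals.
From Coquelicot Require Import Coquelicot.
Open Scope R_scope.

(* The Hamiltonian G^+ (angles lifted to R; actions I1, Ip > 0). *)
Definition Gplus (p : nat) (th1 thp I1 Ip : R) : R :=
  Rpower (sqrt 2) (1 - INR p) * Rpower I1 (INR p / 2) * sqrt Ip
  * cos (INR p * th1 - thp).

Definition hamilton_at (p : nat) (th1 thp I1 Ip : R -> R) (t : R) : Prop :=
  is_derive th1 t (Derive (fun x => Gplus p (th1 t) (thp t) x (Ip t)) (I1 t)) /\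
  is_derive thp t (Derive (fun x => Gplus p (th1 t) (thp t) (I1 t) x) (Ip t)) /\
  is_derive I1 t (- Derive (fun x => Gplus p x (thp t) (I1 t) (Ip t)) (th1 t)) /\
  is_derive Ip t (- Derive (fun x => Gplus p (th1 t) x (I1 t) (Ip t)) (thp t)).

(* Main.v *)
Require Import Defs.
From Stdlib Require Import Reals Lra Ranalysis5.
From Coquelicot Require Import Coquelicot.
Open Scope R_scope.

Lemma inv_fun (F h : R -> R) (a b : R) : a < b ->
 (forall y, a <= y <= b -> is_derive F y (h y)) ->
 (forall y, a <= y <= b -> 0 < h y) ->
 (forall x y, a <= x -> x < y -> y <= b -> F x < F y) /\
 exists S : R -> R,
 (forall y, a <= y <= b -> S (F y) = y) /\
 (forall t, F a <= t <= F b -> a <= S t <= b /\ F (S t) = t) /\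
 (forall t, F a < t < F b -> is_derive S t (/ h (S t))).
Proof.
intros Hab Hd Hp.
assert (incr : forall x y, a <= x -> x < y -> y <= b -> F x < F y).
{ intros x y H1 H2 H3.
  refine (incr_function_le F a b h _ _ x y _ H2 _).
  - intros z Hz1 Hz2; simpl in *; apply Hd; lra.
  - intros z Hz1 Hz2; simpl in *; apply Rlt_gt, Hp; lra.
  - simpl; lra.
  - simpl; lra. }
assert (cont : forall y, a <= y <= b -> continuity_pt F y).
{ intros y Hy. apply continuity_pt_filterlim.
  apply (ex_derive_continuous (K:=R_AbsRing) (V:=R_NormedModule)). exists (h y). now apply Hd. }
set (S := fun t => match Rle_dec (F a) t with
   | left h1 => match Rle_dec t (F b) with
      | left h2 => proj1_sig (f_interv_is_interv F a b t Hab (conj h1 h2) cont)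
      | right _ => a end
   | right _ => a end).
assert (P2 : forall t, F a <= t <= F b -> a <= S t <= b /\ F (S t) = t).
{ intros t Ht. unfold S.
  destruct (Rle_dec (F a) t) as [h1|h1]; [|lra].
  destruct (Rle_dec t (F b)) as [h2|h2]; [|lra].
  destruct (f_interv_is_interv F a b t Hab (conj h1 h2) cont) as [x Hx]. simpl. exact Hx. }
assert (P1 : forall y, a <= y <= b -> S (F y) = y).
{ intros y Hy.
  assert (Hr : F a <= F y <= F b).
  { split.
    - destruct (Req_dec a y) as [->|Hne]; [lra|]. left; apply incr; lra.
    - destruct (Req_dec y b) as [->|Hne]; [lra|]. left; apply incr; lra. }
  destruct (P2 _ Hr) as [H1 H2].
  destruct (Rtotal_order (S (F y)) y) as [Hl|[He|Hg]]; auto.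
  - assert (F (S (F y)) < F y) by (apply incr; lra). lra.
  - assert (F y < F (S (F y))) by (apply incr; lra). lra. }
split; [exact incr|]. exists S. split; [exact P1|]. split; [exact P2|].
intros t Ht.
assert (Hcont : continuity_pt S t).
{ apply (continuity_pt_recip_interv F S a b Hab incr).
  - intros x h1 h2. unfold comp, id. apply (P2 x). lra.
  - intros x h1 h2. apply (P2 x). lra.
  - exact cont.
  - exact Ht. }
assert (HSa : S (F a) = a) by (apply P1; lra).
assert (HSb : S (F b) = b) by (apply P1; lra).
assert (Prf : forall z, S (F a) <= z <= S (F b) -> derivable_pt F z).
{ intros z Hz. rewrite HSa, HSb in Hz. exists (h z).
  apply is_derive_Reals. apply Hd. exact Hz. }
assert (Hab' : F a < F b) by (apply incr; lra).
destruct (P2 t (conj (Rlt_le _ _ (proj1 Ht)) (Rlt_le _ _ (proj2 Ht)))) as [HSt HFSt].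
assert (Prg_incr : S (F a) <= S t <= S (F b)) by (rewrite HSa, HSb; exact HSt).
assert (Hdp : derive_pt F (S t) (Prf (S t) Prg_incr) = h (S t)).
{ apply derive_pt_eq_0. apply is_derive_Reals. apply Hd. exact HSt. }
assert (Hl := derivable_pt_lim_recip_interv F S (F a) (F b) t Prf Hcont Hab' Ht Prg_incr).
apply is_derive_Reals.
replace (/ h (S t)) with (1 / derive_pt F (S t) (Prf (S t) Prg_incr)).
- apply Hl.
  + intros x Hx. unfold comp, id. apply (P2 x). exact Hx.
  + rewrite Hdp. specialize (Hp _ HSt). lra.
- rewrite Hdp. unfold Rdiv. ring.
Qed.

Lemma rpow_pos x e : 0 < Rpower x e.
Proof. unfold Rpower. apply exp_pos. Qed.

Lemma rpow_le_self x e : 0 < x <= 1 -> 1 <= e -> Rpower x e <= x.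
Proof.
intros Hx He. unfold Rpower.
assert (Hl : ln x <= 0) by (rewrite <- ln_1; apply ln_le; lra).
assert (e * ln x <= ln x) by nra.
rewrite <- (exp_ln x) at 2 by lra.
destruct H as [H|H]; [left; apply exp_increasing; exact H| rewrite H; lra].
Qed.

Lemma key (P c : R) : 0 < c ->
  2 * sqrt c / (Rpower (sqrt 2) (1 - P) * Rpower c (P / 2))
  = Rpower (sqrt 2) (P + 1) / Rpower c ((P - 1) / 2).
Proof.
intros Hc.
assert (HBA : Rpower (sqrt 2) (P + 1) * Rpower (sqrt 2) (1 - P) = 2).
{ rewrite <- Rpower_plus. replace (P + 1 + (1 - P)) with (INR 2) by (simpl; ring).
  rewrite Rpower_pow by (apply sqrt_lt_R0; lra). simpl. rewrite Rmult_1_r. apply sqrt_sqrt; lra. }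
assert (HC : sqrt c * Rpower c ((P - 1) / 2) = Rpower c (P / 2)).
{ rewrite <- Rpower_sqrt by lra. rewrite <- Rpower_plus. f_equal. field. }
assert (H1 := rpow_pos (sqrt 2) (1 - P)).
assert (H2 := rpow_pos c ((P-1)/2)).
assert (H3 := rpow_pos c (P/2)).
rewrite <- HBA at 1.
replace (sqrt c) with (Rpower c (P / 2) / Rpower c ((P - 1) / 2)).
2:{ rewrite <- HC. field. lra. }
field. repeat split; lra.
Qed.

Lemma Dx (A P : R) : Derive (fun x => A * cos (P * x - PI/2)) 0 = A * P.
Proof.
apply is_derive_unique. auto_derive; auto.
replace (P * 0 + - (PI/2)) with (- (PI/2)) by ring. rewrite sin_neg, sin_PI2. ring.
Qed.

Lemma Dy (A P : R) : Derive (fun x => A * cos (P * 0 - x)) (PI/2) = - A.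
Proof.
apply is_derive_unique. auto_derive; auto.
replace (P * 0 + - (PI/2)) with (- (PI/2)) by ring. rewrite sin_neg, sin_PI2. ring.
Qed.

Lemma D_zero (f : R -> R) x : Derive (fun y => f y * 0) x = 0.
Proof.
rewrite (Derive_ext _ (fun _ => 0)); [apply Derive_const | intros; ring].
Qed.

Lemma sqrt_cP c P : 0 <= c -> 0 < P -> sqrt (c / P ^ 2) = sqrt c / P.
Proof.
intros. unfold Rdiv. rewrite sqrt_mult_alt by lra.
rewrite sqrt_inv. rewrite sqrt_pow2 by lra. reflexivity.
Qed.

Lemma h_pos a c P y : 0 < a -> 0 < y -> 0 < c - P * y ->
  0 < / (a * Rpower (c - P * y) (P / 2) * sqrt y).
Proof.
intros. apply Rinv_0_lt_compat. apply Rmult_lt_0_compat; [apply Rmult_lt_0_compat|].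
lra. apply rpow_pos. apply sqrt_lt_R0; lra.
Qed.

Lemma h_cont a c P y : 0 < a -> 0 < y -> 0 < c - P * y ->
  continuous (fun y => / (a * Rpower (c - P * y) (P / 2) * sqrt y)) y.
Proof.
intros. apply (ex_derive_continuous (K:=R_AbsRing) (V:=R_NormedModule)).
unfold Rpower. auto_derive. repeat split; try lra.
apply Rgt_not_eq. apply Rmult_lt_0_compat; [apply Rmult_lt_0_compat|].
lra. apply exp_pos. apply sqrt_lt_R0; lra.
Qed.

Theorem lemma3p3 (p : nat) (c : R) :
  (2 <= p)%nat -> 0 < c ->
  exists eps0 : R, 0 < eps0 /\
  forall eps : R, 0 < eps -> eps < eps0 -> INR p * eps < c ->
  exists (th1 thp I1 Ip : R -> R) (T0 : R),
    0 < T0 /\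
    (forall t, 0 <= t <= T0 ->
       0 < I1 t /\ 0 < Ip t /\ hamilton_at p th1 thp I1 Ip t) /\
    I1 0 = c - INR p * eps /\ Ip 0 = eps /\
    I1 T0 = c * (1 - / INR p) /\ Ip T0 = c / (INR p ^ 2) /\
    Rpower (sqrt 2) (INR p + 1) / Rpower c ((INR p - 1) / 2) / INR p <= T0 /\
    T0 <= Rpower (sqrt 2) (INR p + 1)
          / (Rpower c ((INR p - 1) / 2) * Rpower (1 - / INR p) (INR p / 2))
          / INR p.
Proof.
intros Hp Hc.
assert (HP : 2 <= INR p).
{ replace 2 with (INR 2) by (simpl; ring). apply le_INR; exact Hp. }
set (P := INR p) in *.
exists (c / (36 * P ^ 4)). split.
{ apply Rdiv_lt_0_compat; [lra|]. assert (0 < P ^ 4) by (apply pow_lt; lra). lra. }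
intros eps He1 He2 He3.
assert (HP4 : 0 < P ^ 4) by (apply pow_lt; lra).
assert (He2' : eps * (36 * P ^ 4) < c).
{ apply (Rmult_lt_compat_r (36 * P ^ 4)) in He2; [|lra].
  unfold Rdiv in He2. rewrite Rmult_assoc, Rinv_l in He2 by lra. lra. }
assert (HP2 : 4 <= P ^ 2) by nra.
assert (HP42 : P ^ 4 = P ^ 2 * P ^ 2) by ring.
set (cP := c / P ^ 2).
assert (HcP : cP * P ^ 2 = c) by (unfold cP; field; lra).
assert (HecP : eps < cP).
{ apply (Rmult_lt_reg_r (P ^ 2)); [lra|]. rewrite HcP. nra. }
set (lo := eps / 2). set (hi := 3 * c / (2 * P ^ 2)).
assert (Hhi : cP < hi).
{ unfold hi. apply (Rmult_lt_reg_r (P ^ 2)); [lra|]. rewrite HcP.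
  replace (3 * c / (2 * P ^ 2) * P ^ 2) with (3 * c / 2) by (field; lra). lra. }
assert (HhiP : 0 < c - P * hi).
{ unfold hi. replace (P * (3 * c / (2 * P ^ 2))) with (3 * c / (2 * P)) by (field; lra).
  assert (3 * c / (2 * P) < c); [|lra].
  apply (Rmult_lt_reg_r (2 * P)); [lra|].
  replace (3 * c / (2 * P) * (2 * P)) with (3 * c) by (field; lra). nra. }
set (a := Rpower (sqrt 2) (1 - P)).
assert (Ha : 0 < a) by apply rpow_pos.
set (h := fun y => / (a * Rpower (c - P * y) (P / 2) * sqrt y)).
assert (Hhp : forall y, 0 < y -> y <= hi -> 0 < h y).
{ intros y Hy1 Hy2. apply h_pos; auto. nra. }
assert (Hhc : forall y, 0 < y -> y <= (hi + c / P) / 2 -> continuous h y).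
{ intros y Hy1 Hy2. apply h_cont; auto.
  assert (P * y <= P * ((hi + c / P) / 2)) by (apply Rmult_le_compat_l; lra).
  replace (P * ((hi + c / P) / 2)) with ((P * hi + c) / 2) in H by (field; lra).
  lra. }
set (F := fun y => RInt h eps y).
assert (HFd : forall y, lo <= y <= hi -> is_derive F y (h y)).
{ intros y Hy.
  assert (Hr : 0 < Rmin (lo / 2) ((c / P - hi) / 2)).
  { apply Rmin_glb_lt. unfold lo; lra.
    assert (P * hi < c) by lra.
    assert (hi < c / P); [|lra].
    apply (Rmult_lt_reg_r P); [lra|]. replace (c / P * P) with c by (field; lra). lra. }
  apply (is_derive_RInt h F eps y).
  - exists (mkposreal _ Hr). intros b0 Hb0.
    change (Rabs (b0 - y) < Rmin (lo / 2) ((c / P - hi) / 2)) in Hb0.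
    apply Rabs_def2 in Hb0. destruct Hb0 as [Hb1 Hb2].
    assert (Hm1 := Rmin_l (lo / 2) ((c / P - hi) / 2)).
    assert (Hm2 := Rmin_r (lo / 2) ((c / P - hi) / 2)).
    unfold F. apply (RInt_correct (V:=R_CompleteNormedModule)). apply (ex_RInt_continuous (V:=R_CompleteNormedModule)).
    intros z Hz. apply Hhc.
    + assert (0 < Rmin eps b0) by (apply Rmin_glb_lt; unfold lo in *; lra). lra.
    + assert (Rmax eps b0 <= (hi + c / P) / 2) by (apply Rmax_lub; unfold lo in *; lra). lra.
  - apply Hhc. unfold lo in *; lra. 
    assert (hi < c / P); [|lra].
    apply (Rmult_lt_reg_r P); [lra|]. replace (c / P * P) with c by (field; lra). lra. }
assert (Hlohi : lo < hi) by (unfold lo; lra).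
destruct (inv_fun F h lo hi Hlohi HFd) as [incr [S [P1 [P2 P3]]]].
{ intros y Hy. apply Hhp; unfold lo in *; lra. }
assert (HF0 : F eps = 0) by (unfold F; apply (RInt_point (V:=R_CompleteNormedModule))).
set (T0 := F cP).
assert (Hlo : F lo < 0) by (rewrite <- HF0; apply incr; unfold lo in *; lra).
assert (HT0 : 0 < T0) by (rewrite <- HF0; apply incr; unfold lo in *; lra).
assert (HT0hi : T0 < F hi) by (apply incr; unfold lo in *; lra).
assert (HS : forall t, 0 <= t <= T0 -> eps <= S t <= cP /\ F (S t) = t /\ is_derive S t (/ h (S t))).
{ intros t Ht. destruct (P2 t) as [HSt HFSt]; [lra|].
  split; [|split; [exact HFSt| apply P3; lra]].
  split.
  - destruct (Rle_lt_dec eps (S t)) as [?|Hl]; auto.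
    assert (F lo <= F (S t)).
    { destruct (Req_dec lo (S t)) as [<-|Hne]; [lra|]. left; apply incr; lra. }
    assert (F (S t) < F eps) by (apply incr; unfold lo in *; lra). lra.
  - destruct (Rle_lt_dec (S t) cP) as [?|Hl]; auto.
    assert (F (S t) <= F hi).
    { destruct (Req_dec (S t) hi) as [->|Hne]; [lra|]. left; apply incr; lra. }
    assert (F cP < F (S t)) by (apply incr; unfold lo in *; lra). fold T0 in H0. lra. }
assert (HS0 : S 0 = eps) by (rewrite <- HF0; apply P1; unfold lo; lra).
assert (HST : S T0 = cP) by (apply P1; unfold lo; lra).
exists (fun _ => 0), (fun _ => PI / 2), (fun t => c - P * S t), S, T0.
split; [exact HT0|].
split.
{ intros t Ht. destruct (HS t Ht) as [[HS1 HS2] [_ HSd]].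
  assert (HPS : P * S t <= c / P).
  { apply (Rmult_le_reg_r P); [lra|]. replace (c / P * P) with c by (field; lra).
    apply (Rmult_le_compat_r (P * P)) in HS2; [|nra].
    replace (cP * (P * P)) with c in HS2 by (rewrite <- HcP; ring). nra. }
  assert (HcPP : c / P < c).
  { apply (Rmult_lt_reg_r P); [lra|]. replace (c / P * P) with c by (field; lra). nra. }
  split; [lra|]. split; [lra|].
  unfold hamilton_at, Gplus.
  replace (cos (INR p * 0 - PI / 2)) with 0.
  2:{ replace (INR p * 0 - PI / 2) with (- (PI / 2)) by ring. rewrite cos_neg, cos_PI2. reflexivity. }
  rewrite !D_zero, Dx, Dy. fold P.
  assert (Hinv : / h (S t) = a * Rpower (c - P * S t) (P / 2) * sqrt (S t)).
  { unfold h. rewrite Rinv_inv. reflexivity. }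
  split; [apply is_derive_Reals, derivable_pt_lim_const|].
  split; [apply is_derive_Reals, derivable_pt_lim_const|].
  split.
  - replace (- (Rpower (sqrt 2) (1 - P) * Rpower (c - P * S t) (P / 2) * sqrt (S t) * P))
      with (0 - P * / h (S t)) by (rewrite Hinv; unfold a; ring).
    apply is_derive_Reals. apply (derivable_pt_lim_minus (fun _ => c) (fun t => P * S t)).
    apply derivable_pt_lim_const. apply (derivable_pt_lim_scal S P).
    apply is_derive_Reals; exact HSd.
  - replace (- - (Rpower (sqrt 2) (1 - P) * Rpower (c - P * S t) (P / 2) * sqrt (S t)))
      with (/ h (S t)) by (rewrite Hinv; unfold a; ring).
    exact HSd. }
assert (HP0 : 0 < P) by lra.
assert (Hse := sqrt_lt_R0 eps He1).
assert (Hsc := sqrt_lt_R0 c Hc).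
assert (Hsee : sqrt eps * sqrt eps = eps) by (apply sqrt_sqrt; lra).
assert (Hscc : sqrt c * sqrt c = c) by (apply sqrt_sqrt; lra).
assert (HsqcP : sqrt cP = sqrt c / P) by (apply sqrt_cP; lra).
assert (HPcP : P * cP = c / P) by (unfold cP; field; lra).
assert (Hhex : ex_RInt h eps cP).
{ apply (ex_RInt_continuous (V:=R_CompleteNormedModule)). intros z Hz.
  rewrite Rmin_left, Rmax_right in Hz by lra. apply Hhc. lra.
  assert (hi < c / P); [|lra].
  apply (Rmult_lt_reg_r P); [lra|]. replace (c / P * P) with c by (field; lra). lra. }
split; [rewrite HS0; reflexivity|].
split; [exact HS0|].
split; [rewrite HST; unfold cP; field; lra|].
split; [exact HST|].
split.
-
  set (K0 := / (a * Rpower c (P / 2))).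
  assert (HK0 : 0 < K0).
  { unfold K0. apply Rinv_0_lt_compat, Rmult_lt_0_compat; [lra| apply rpow_pos]. }
  set (G := fun y => K0 * (2 * sqrt y + 2 * P / (3 * c) * (y * sqrt y))).
  set (g2 := fun y => K0 * (/ sqrt y + P / c * sqrt y)).
  assert (HD : forall y, Rmin eps cP <= y <= Rmax eps cP -> is_derive G y (g2 y)).
  { intros y Hy. rewrite Rmin_left, Rmax_right in Hy by lra.
    assert (Hy0 : 0 < y) by lra.
    unfold G, g2. auto_derive; [lra|].
    assert (Hs := sqrt_sqrt y (Rlt_le _ _ Hy0)).
    assert (Hsp := sqrt_lt_R0 y Hy0).
    set (s := sqrt y) in *. clearbody s. subst y. field. split; lra. }
  assert (HC : forall y, Rmin eps cP <= y <= Rmax eps cP -> continuous g2 y).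
  { intros y Hy. rewrite Rmin_left, Rmax_right in Hy by lra.
    apply (ex_derive_continuous (K:=R_AbsRing) (V:=R_NormedModule)).
    unfold g2. auto_derive. repeat split; try lra. apply Rgt_not_eq, sqrt_lt_R0; lra.
    }
  assert (HI := is_RInt_derive G g2 eps cP HD HC).
  assert (Hpt : forall y, eps < y < cP -> g2 y <= h y).
  { intros y Hy.
    assert (Hy0 : 0 < y) by lra.
    set (x := P * y / c).
    assert (Hx0 : 0 < x) by (unfold x; apply Rdiv_lt_0_compat; nra).
    assert (Hx1 : x <= 1 / 2).
    { unfold x. apply (Rmult_le_reg_r c); [lra|].
      replace (P * y / c * c) with (P * y) by (field; lra).
      assert (P * y <= c / P) by nra.
      assert (c / P <= c / 2); [|lra].
      apply (Rmult_le_reg_r (2 * P)); [lra|].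
      replace (c / P * (2 * P)) with (2 * c) by (field; lra).
      replace (c / 2 * (2 * P)) with (c * P) by (field; lra). nra. }
    assert (HR : Rpower (c - P * y) (P / 2) <= Rpower c (P / 2) * (1 - x)).
    { replace (c - P * y) with (c * (1 - x)) by (unfold x; field; lra).
      rewrite <- Rpower_mult_distr by lra.
      apply Rmult_le_compat_l; [left; apply rpow_pos|].
      apply rpow_le_self; lra. }
    assert (Hs := sqrt_sqrt y (Rlt_le _ _ Hy0)).
    assert (Hsp := sqrt_lt_R0 y Hy0).
    assert (HRc := rpow_pos c (P / 2)).
    assert (HRy := rpow_pos (c - P * y) (P / 2)).
    apply Rle_trans with (/ (a * (Rpower c (P / 2) * (1 - x)) * sqrt y)).
    2:{ unfold h. apply Rinv_le_contravar.
        - apply Rmult_lt_0_compat; [apply Rmult_lt_0_compat|]; lra.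
        - apply Rmult_le_compat_r; [lra|]. apply Rmult_le_compat_l; lra. }
    assert (Hxx : 1 + x <= / (1 - x)).
    { apply (Rmult_le_reg_r (1 - x)); [lra|]. rewrite Rinv_l by lra. nra. }
    replace (g2 y) with (K0 * (1 + x) * / sqrt y).
    2:{ assert (E : K0 * (/ sqrt y + P / c * sqrt y) = K0 * (1 + P * (sqrt y * sqrt y) / c) * / sqrt y)
          by (field; split; lra).
        rewrite Hs in E. unfold g2, x. symmetry; exact E. }
    replace (/ (a * (Rpower c (P / 2) * (1 - x)) * sqrt y)) with (K0 * / (1 - x) * / sqrt y).
    2:{ unfold K0. field. repeat split; lra. }
    apply Rmult_le_compat_r; [left; apply Rinv_0_lt_compat; lra|].
    apply Rmult_le_compat_l; lra. }
  assert (HT1 : RInt g2 eps cP <= T0).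
  { unfold T0, F. apply RInt_le; [lra| |exact Hhex|].
    - eexists; exact HI.
    - exact Hpt. }
  rewrite (is_RInt_unique _ _ _ _ HI) in HT1.
  change (minus (G cP) (G eps)) with (G cP - G eps) in HT1.
  assert (HGe : G cP - G eps >= K0 * (2 * sqrt c / P)).
  { unfold G. rewrite HsqcP.
    assert (Hlt : sqrt eps < sqrt c / (6 * P ^ 2)).
    { destruct (Rlt_le_dec (sqrt eps) (sqrt c / (6 * P ^ 2))) as [?|Hge]; auto.
      assert (HX : 0 < sqrt c / (6 * P ^ 2)) by (apply Rdiv_lt_0_compat; nra).
      assert (sqrt c / (6 * P ^ 2) * (sqrt c / (6 * P ^ 2)) <= eps) by nra.
      replace (sqrt c / (6 * P ^ 2) * (sqrt c / (6 * P ^ 2))) with (c / (36 * P ^ 4)) in H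
        by (rewrite <- Hscc at 1; field; lra). lra. }
    assert (Hq : 2 * P / (3 * c) * eps <= 1).
    { apply (Rmult_le_reg_r (3 * c)); [lra|].
      replace (2 * P / (3 * c) * eps * (3 * c)) with (2 * P * eps) by (field; lra).
      assert (2 * P <= 36 * P ^ 4) by nra. nra. }
    assert (H3 : 2 * P / (3 * c) * (cP * (sqrt c / P)) = 2 / 3 * (sqrt c / P ^ 2)).
    { unfold cP. field. split; lra. }
    assert (H4 : sqrt c / (6 * P ^ 2) = / 6 * (sqrt c / P ^ 2)) by (field; lra).
    assert (H5 : 2 * sqrt c / P = 2 * (sqrt c / P)) by (field; lra).
    rewrite H5. apply Rle_ge. rewrite <- Rmult_minus_distr_l. apply Rmult_le_compat_l; [lra|].
    rewrite H3.
    assert (2 * P / (3 * c) * (eps * sqrt eps) <= sqrt eps).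
    { rewrite <- Rmult_assoc. rewrite <- (Rmult_1_l (sqrt eps)) at 2.
      apply Rmult_le_compat_r; lra. }
    lra. }
  unfold G in HT1, HGe.
  assert (Heq : Rpower (sqrt 2) (P + 1) / Rpower c ((P - 1) / 2) / P = K0 * (2 * sqrt c / P)).
  { rewrite <- (key P c Hc). unfold K0. fold a. field.
    split; [lra|]. split; [apply Rgt_not_eq, rpow_pos|lra]. }
  rewrite Heq. lra.
-
  assert (HiP : / P <= 1 / 2).
  { apply (Rmult_le_reg_r P); [lra|]. rewrite Rinv_l by lra. lra. }
  assert (Hc1 : 0 < c * (1 - / P)) by nra.
  set (K1 := / (a * Rpower (c * (1 - / P)) (P / 2))).
  assert (HK1 : 0 < K1).
  { unfold K1. apply Rinv_0_lt_compat, Rmult_lt_0_compat; [lra| apply rpow_pos]. }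
  set (G := fun y => K1 * (2 * sqrt y)).
  set (g1 := fun y => K1 * / sqrt y).
  assert (HD : forall y, Rmin eps cP <= y <= Rmax eps cP -> is_derive G y (g1 y)).
  { intros y Hy. rewrite Rmin_left, Rmax_right in Hy by lra.
    assert (Hsp := sqrt_lt_R0 y ltac:(lra)).
    unfold G, g1. auto_derive; [lra|]. field. lra. }
  assert (HC : forall y, Rmin eps cP <= y <= Rmax eps cP -> continuous g1 y).
  { intros y Hy. rewrite Rmin_left, Rmax_right in Hy by lra.
    apply (ex_derive_continuous (K:=R_AbsRing) (V:=R_NormedModule)).
    unfold g1. auto_derive. repeat split; try lra. apply Rgt_not_eq, sqrt_lt_R0; lra. }
  assert (HI := is_RInt_derive G g1 eps cP HD HC).
  assert (Hpt : forall y, eps < y < cP -> h y <= g1 y).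
  { intros y Hy.
    assert (Hsp := sqrt_lt_R0 y ltac:(lra)).
    assert (HY := rpow_pos (c * (1 - / P)) (P / 2)).
    assert (HR : Rpower (c * (1 - / P)) (P / 2) <= Rpower (c - P * y) (P / 2)).
    { apply Rle_Rpower_l; [lra|]. split; [lra|].
      assert (P * y <= c / P) by nra.
      replace (c * (1 - / P)) with (c - c / P) by (field; lra). lra. }
    unfold h, g1, K1. rewrite <- Rinv_mult. apply Rinv_le_contravar.
    - apply Rmult_lt_0_compat; [apply Rmult_lt_0_compat|]; lra.
    - apply Rmult_le_compat_r; [lra|]. apply Rmult_le_compat_l; lra. }
  assert (HT1 : T0 <= RInt g1 eps cP).
  { unfold T0, F. apply RInt_le; [lra|exact Hhex| |].
    - eexists; exact HI.
    - exact Hpt. }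
  rewrite (is_RInt_unique _ _ _ _ HI) in HT1.
  change (minus (G cP) (G eps)) with (G cP - G eps) in HT1.
  unfold G in HT1. rewrite HsqcP in HT1.
  assert (Heq : Rpower (sqrt 2) (P + 1) / (Rpower c ((P - 1) / 2) * Rpower (1 - / P) (P / 2)) / P
     = K1 * (2 * (sqrt c / P))).
  { assert (H1 := rpow_pos c ((P - 1) / 2)).
    assert (H2 := rpow_pos (1 - / P) (P / 2)).
    assert (H3 := rpow_pos c (P / 2)).
    replace (Rpower (sqrt 2) (P + 1) / (Rpower c ((P - 1) / 2) * Rpower (1 - / P) (P / 2)) / P)
      with (Rpower (sqrt 2) (P + 1) / Rpower c ((P - 1) / 2) / Rpower (1 - / P) (P / 2) / P)
      by (field; repeat split; lra).
    rewrite <- (key P c Hc). unfold K1. fold a.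
    rewrite <- Rpower_mult_distr by lra.
    field. repeat split; lra. }
  rewrite Heq. nra.
Qed.
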